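(* Let $t\ge1$ and $n=t+1$. The gadget $\mathtt{SecScalarMult}$ defined below is $t$-SNI secure. $\mathtt{SecScalarMult}$ takes as input a Boolean sharing $(\mathbf{x}_i)_{1\le i\le n}$ of a vector $\mathbf{x}\in\mathbb{F}_q^l$ and a multiplicative sharing $(p_i)_{1\le i\le n}$ of a coefficient $p\in\mathbb{F}_q^*$, and outputs a Boolean sharing $(\mathbf{y}_i)$ of $p\cdot\mathbf{x}$, computed as follows: set $(\mathbf{y}_i):=(\mathbf{x}_i)$; for $j=1,\dots,n$: for $k=1,\dots,l$: set $\mathbf{y}[k]_i := p_j\cdot\mathbf{y}[k]_i$ for every $i$, then set $(\mathbf{y}[k]_i):=\mathtt{Refresh}((\mathbf{y}[k]_i))$. Return $(\mathbf{y}_i)$.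
   Context: A Boolean sharing of $x\in\mathbb{F}_q$ is a tuple $(x_1,\dots,x_n)$ with $x=x_1+\cdots+x_n$ (field addition); vectors are shared coordinate-wise, and $\mathbf{v}[k]$ is the $k$-th coordinate. A multiplicative sharing of $p\in\mathbb{F}_q^*$ is $(p_1,\dots,p_n)\in(\mathbb{F}_q^* )^n$ with $p=p_1\cdots p_n$. $\mathtt{Refresh}((x_i))$: set $y_i:=x_i$; for $i=2,\dots,n$: sample $r$ uniformly from $\mathbb{F}_q$, set $y_1:=y_1+r$ and $y_i:=y_i-r$; return $(y_i)$. Probing model: an adversary may place probes on intermediate values (internal wires) of a gadget and on its output shares. A gadget with one output sharing and some input sharings is $t$-NI (resp. $t$-SNI) secure if any set of at most $t_1$ probes on internal wires and $t_2$ probes on output shares, with $t_1+t_2\le t$, can be perfectly simulated using at most $t_1+t_2$ (resp. $t_1$) shares of each of its input sharings. *)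

(* Defs.v *)
From mathcomp Require Import all_boot all_order all_algebra.
Set Implicit Arguments. Unset Strict Implicit. Unset Printing Implicit Defensive.
Import GRing.Theory.
Local Open Scope ring_scope.

(* Shares are indexed by 'I_n with n = t.+1 (0-based: share 0 is the paper's share 1). *)

(* One iteration of Refresh, for the paper's share index i = m+2 (0-based: lift ord0 m).
   Wires emitted: the fresh random r, the new first share, the new i-th share. *)
Definition refresh_step (F : finFieldType) (t : nat) (c : 'I_t -> F)
    (acc : seq F * ('I_t.+1 -> F)) (m : 'I_t) : seq F * ('I_t.+1 -> F) :=
  let r := c m in
  let y := acc.2 in
  let i : 'I_t.+1 := lift ord0 m in
  let y' := fun a : 'I_t.+1 =>
      if a == ord0 then y a + r else if a == i then y a - r else y a in
  (acc.1 ++ [:: r; y' ord0; y' i], y').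

Definition refresh (F : finFieldType) (t : nat) (c : 'I_t -> F) (y : 'I_t.+1 -> F)
  : seq F * ('I_t.+1 -> F) :=
  foldl (refresh_step c) ([::], y) (enum 'I_t).

(* Random coins of SecScalarMult: coins (j, k, m) are the samples of the
   Refresh performed at iteration (j, k). *)
Definition ssm_coins (F : finFieldType) (t l : nat) : finType :=
  {ffun 'I_t.+1 * 'I_l * 'I_t -> F}.

(* State: Y k i = y[k]_i. *)
Definition ssm_step (F : finFieldType) (t l : nat) (p : {ffun 'I_t.+1 -> F})
    (c : ssm_coins F t l)
    (acc : seq F * ('I_l -> 'I_t.+1 -> F)) (jk : 'I_t.+1 * 'I_l)
  : seq F * ('I_l -> 'I_t.+1 -> F) :=
  let j := jk.1 in let k := jk.2 in
  let Y := acc.2 in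
  let z := fun i : 'I_t.+1 => p j * Y k i in
  let rr := refresh (fun m => c (j, k, m)) z in
  (acc.1 ++ [seq z i | i <- enum 'I_t.+1] ++ rr.1,
   fun k' => if k' == k then rr.2 else Y k').

(* Full execution of SecScalarMult on input shares x (x i = x_i in F^l) and
   multiplicative shares p.  Returns the trace of all internal wires (input shares
   read, every product, every random value and every refreshed share) and the
   final state (output shares, Y k i = y[k]_i). *)
Definition ssm (F : finFieldType) (t l : nat)
    (x : {ffun 'I_t.+1 -> {ffun 'I_l -> F}}) (p : {ffun 'I_t.+1 -> F})
    (c : ssm_coins F t l) : seq F * ('I_l -> 'I_t.+1 -> F) :=
  foldl (ssm_step p c)
    ([seq x i k | i <- enum 'I_t.+1, k <- enum 'I_l] ++ [seq p j | j <- enum 'I_t.+1],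
     fun k i => x i k)
    [seq (j, k) | j <- enum 'I_t.+1, k <- enum 'I_l].

(* Values observed by an adversary probing internal wires P (positions in the trace)
   and output shares O (each a whole vector share y_i). *)
Definition ssm_obs (F : finFieldType) (t l : nat) (P : seq nat) (O : {set 'I_t.+1})
    (x : {ffun 'I_t.+1 -> {ffun 'I_l -> F}}) (p : {ffun 'I_t.+1 -> F})
    (c : ssm_coins F t l) : seq F :=
  let res := ssm x p c in
  [seq nth 0 res.1 w | w <- P] ++ [seq res.2 k i | i <- enum O, k <- enum 'I_l].

Definition ssm_prob (F : finFieldType) (t l : nat) (P : seq nat) (O : {set 'I_t.+1})
    (x : {ffun 'I_t.+1 -> {ffun 'I_l -> F}}) (p : {ffun 'I_t.+1 -> F}) (v : seq F) : rat :=
  (#|[set c : ssm_coins F t l | ssm_obs P O x p c == v]|)%:R / (#|ssm_coins F t l|)%:R.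

Definition share_mask (A : Type) (n : nat) (I : {set 'I_n}) (f : {ffun 'I_n -> A})
  : {ffun 'I_n -> option A} :=
  [ffun i => if i \in I then Some (f i) else None].

(* Main.v *)
Require Import Defs.
From mathcomp Require Import all_boot all_order all_algebra.
From Stdlib Require Import FunctionalExtensionality.
Set Implicit Arguments. Unset Strict Implicit. Unset Printing Implicit Defensive.
Import GRing.Theory.
Local Open Scope ring_scope.

Section Proof.
Variables (F : finFieldType) (t l : nat).
Local Notation n := t.+1.

Inductive wire := WZ of 'I_n | WR of 'I_t | W0 of 'I_t | WI of 'I_t.
Inductive lab := LX of 'I_n & 'I_l | LP of 'I_n | LB of 'I_n & 'I_l & wire.

Fixpoint agr (G : lab -> Prop) (L : seq lab) (s s' : seq F) : Prop :=
  match L, s, s' with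
  | [::], [::], [::] => True
  | a :: L1, u :: s1, u' :: s1' => (G a -> u = u') /\ agr G L1 s1 s1'
  | _, _, _ => False
  end.

Lemma agr_cat G L1 L2 s1 s2 s1' s2' :
  agr G L1 s1 s1' -> agr G L2 s2 s2' -> agr G (L1 ++ L2) (s1 ++ s2) (s1' ++ s2').
Proof.
elim: L1 s1 s1' => [|a L1 IH] [|u s1] [|u' s1'] //= [H1 H2] H3.
by split => //; apply: IH.
Qed.

Lemma agr_size G L s s' : agr G L s s' -> size s = size L /\ size s' = size L.
Proof.
elim: L s s' => [|a L IH] [|u s] [|u' s'] //= [_ H].
by case: (IH _ _ H) => -> ->.
Qed.

Lemma agr_nth G L s s' w d : agr G L s s' -> (w < size L)%N -> G (nth d L w) ->
  nth 0 s w = nth 0 s' w.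
Proof.
elim: L s s' w => [|a L IH] [|u s] [|u' s'] [|w] //= [H1 H2] Hw HG.
  exact: H1.
exact: IH.
Qed.

Lemma agr_map (A : Type) G (h : A -> lab) (f g : A -> F) (s : seq A) :
  (forall a, G (h a) -> f a = g a) -> agr G (map h s) (map f s) (map g s).
Proof. by move=> H; elim: s => //= a s IH; split => //; apply: H. Qed.

Lemma agr_flatten (A : Type) G (h : A -> seq lab) (f g : A -> seq F) (s : seq A) :
  (forall a, agr G (h a) (f a) (g a)) ->
  agr G (flatten (map h s)) (flatten (map f s)) (flatten (map g s)).
Proof. by move=> H; elim: s => //= a s IH; apply: agr_cat. Qed.

Lemma agr_allpairs (A B : Type) G (h : A -> B -> lab) (f g : A -> B -> F)
   (s : seq A) (s2 : seq B) :
  (forall a b, G (h a b) -> f a b = g a b) ->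
  agr G [seq h a b | a <- s, b <- s2] [seq f a b | a <- s, b <- s2]
        [seq g a b | a <- s, b <- s2].
Proof.
move=> H; elim: s => [|a s IH]; first by [].
rewrite !allpairs_cons; apply: agr_cat => //; apply: (@agr_map _ G (h a) (f a) (g a)) => b; exact: H.
Qed.

Fixpoint st (x : {ffun 'I_n -> {ffun 'I_l -> F}}) (p : {ffun 'I_n -> F})
   (c : ssm_coins F t l) (j : nat) (k : 'I_l) : 'I_n -> F :=
  match j with
  | 0 => fun i => x i k
  | j'.+1 => (refresh (fun m => c (inord j', k, m))
                (fun i => p (inord j') * st x p c j' k i)).2
  end.

Definition btr (x : {ffun 'I_n -> {ffun 'I_l -> F}}) (p : {ffun 'I_n -> F}) (c : ssm_coins F t l) (jk : 'I_n * 'I_l) : seq F :=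
  let z := fun i => p jk.1 * st x p c jk.1 jk.2 i in
  [seq z i | i <- enum 'I_n] ++ (refresh (fun m => c (jk.1, jk.2, m)) z).1.

Definition init (x : {ffun 'I_n -> {ffun 'I_l -> F}}) (p : {ffun 'I_n -> F}) :=
  [seq x i k | i <- enum 'I_n, k <- enum 'I_l] ++ [seq p j | j <- enum 'I_n].

Lemma row_lemma (x : {ffun 'I_n -> {ffun 'I_l -> F}}) (p : {ffun 'I_n -> F}) (c : ssm_coins F t l) (j : 'I_n) tr (ks : seq 'I_l) : uniq ks ->
  foldl (ssm_step p c) (tr, fun k => st x p c j k) [seq (j, k) | k <- ks] =
  (tr ++ flatten [seq btr x p c (j, k) | k <- ks],
   fun k => if k \in ks then st x p c j.+1 k else st x p c j k).
Proof.
elim/last_ind: ks => [|ks k IH].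
  by move=> _ /=; rewrite cats0.
rewrite rcons_uniq => /andP [kN Hu].
rewrite !map_rcons foldl_rcons IH // flatten_rcons.
rewrite /ssm_step /= (negbTE kN); congr pair.
  by rewrite /btr !catA.
apply: functional_extensionality => k0.
rewrite mem_rcons in_cons.
case: eqP => [->|] //=.
by rewrite inord_val.
Qed.

Definition jklist := [seq (j, k) | j <- enum 'I_n, k <- enum 'I_l].

Lemma CF (x : {ffun 'I_n -> {ffun 'I_l -> F}}) (p : {ffun 'I_n -> F}) (c : ssm_coins F t l) :
  ssm x p c = (init x p ++ flatten [seq btr x p c jk | jk <- jklist],
               fun k => st x p c n k).
Proof.
suff H : forall J, (J <= n)%N ->
  foldl (ssm_step p c) (init x p, fun k => st x p c 0 k)
     [seq (j, k) | j <- take J (enum 'I_n), k <- enum 'I_l] =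
  (init x p ++ flatten [seq btr x p c jk | jk <- [seq (j, k) | j <- take J (enum 'I_n), k <- enum 'I_l]],
   fun k => st x p c J k).
  by have := H n (leqnn _); rewrite take_oversize ?size_enum_ord.
elim => [|J IH] HJ.
  by rewrite take0 /= cats0.
have HJ' : (J < size (enum 'I_n))%N by rewrite size_enum_ord.
rewrite (take_nth ord0 HJ') -cats1 !allpairs_cat foldl_cat IH ?(ltnW HJ) //.
rewrite /= cats0 map_cat flatten_cat catA.
set j := nth ord0 (enum 'I_n) J.
have Hj : nat_of_ord j = J.
  by rewrite /j -[J]/(nat_of_ord (Ordinal HJ)) nth_ord_enum.
have := @row_lemma x p c j (init x p ++ flatten
    [seq btr x p c jk | jk <- [seq (j0, k) | j0 <- take J (enum 'I_n), k <- enum 'I_l]])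
   (enum 'I_l) (enum_uniq _).
rewrite Hj => ->; congr pair.
  by rewrite -map_comp.
by apply: functional_extensionality => k; rewrite mem_enum.
Qed.


Definition rs (c : 'I_t -> F) (y : 'I_n -> F) m := (refresh_step c ([::], y) m).2.
Definition rl (j : 'I_n) (k : 'I_l) m := [:: LB j k (WR m); LB j k (W0 m); LB j k (WI m)].
Definition lineof (w : wire) : option 'I_n :=
  match w with WZ i => Some i | WR _ => None | W0 _ => Some ord0 | WI m => Some (lift ord0 m) end.
Definition blab (jk : 'I_n * 'I_l) :=
  [seq LB jk.1 jk.2 (WZ i) | i <- enum 'I_n] ++ flatten [seq rl jk.1 jk.2 m | m <- enum 'I_t].

Lemma rpair G j k (c c' : 'I_t -> F) (Rel : ('I_n -> F) -> ('I_n -> F) -> Prop) :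
  (forall m y y', Rel y y' -> [/\ Rel (rs c y m) (rs c' y' m),
      G (LB j k (WR m)) -> c m = c' m,
      G (LB j k (W0 m)) -> rs c y m ord0 = rs c' y' m ord0 &
      G (LB j k (WI m)) -> rs c y m (lift ord0 m) = rs c' y' m (lift ord0 m)]) ->
  forall ms L tr tr' y y', agr G L tr tr' -> Rel y y' ->
  agr G (L ++ flatten [seq rl j k m | m <- ms])
      (foldl (refresh_step c) (tr, y) ms).1 (foldl (refresh_step c') (tr', y') ms).1 /\
  Rel (foldl (refresh_step c) (tr, y) ms).2 (foldl (refresh_step c') (tr', y') ms).2.
Proof.
move=> Hstep; elim => [|m ms IH] L tr tr' y y' HL HR /=.
  by rewrite cats0.
have [H1 H2 H3 H4] := Hstep m y y' HR.
rewrite (_ : L ++ _ = (L ++ rl j k m) ++ flatten [seq rl j k m0 | m0 <- ms]); last by rewrite -catA.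
apply: IH => //.
apply: agr_cat => //=; do ! split => //.
Qed.

Lemma refresh_out (c : 'I_t -> F) ms tr y a :
  (foldl (refresh_step c) (tr, y) ms).2 a =
  if a == ord0 then y a + \sum_(m <- ms) c m
  else y a - \sum_(m <- ms | lift ord0 m == a) c m.
Proof.
elim: ms tr y => [|m ms IH] tr y /=.
  by rewrite !big_nil addr0 subr0; case: ifP.
rewrite IH !big_cons.
case: (a =P ord0) => [->|Ha] /=.
  by rewrite addrA.
rewrite (eq_sym (lift _ _)).
case: (a =P lift ord0 m) => [->|Hb] /=.
  by rewrite opprD addrA.
by [].
Qed.

Lemma block_stay G (x x' : {ffun 'I_n -> {ffun 'I_l -> F}}) (p p' : {ffun 'I_n -> F})
    (c c' : ssm_coins F t l) (j : 'I_n) k a d :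
  p' j = p j -> (forall m, c' (j, k, m) = c (j, k, m)) ->
  (forall i, st x' p' c' j k i = st x p c j k i + (if i == a then d else 0)) ->
  (forall w, G (LB j k w) -> lineof w != Some a \/ d = 0) ->
  agr G (blab (j, k)) (btr x p c (j, k)) (btr x' p' c' (j, k)) /\
  forall i, st x' p' c' j.+1 k i = st x p c j.+1 k i + (if i == a then p j * d else 0).
Proof.
move=> Hp Hc Hst HG.
set Rel := fun (y y' : 'I_n -> F) => forall i, y' i = y i + (if i == a then p j * d else 0).
have Hz : Rel (fun i => p j * st x p c j k i) (fun i => p' j * st x' p' c' j k i).
  by move=> i; rewrite Hp Hst mulrDr; case: (i == a); rewrite ?mulr0.
have Hstep : forall m y y', Rel y y' -> [/\ Rel (rs (fun m => c (j, k, m)) y m) (rs (fun m => c' (j, k, m)) y' m),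
      G (LB j k (WR m)) -> c (j, k, m) = c' (j, k, m),
      G (LB j k (W0 m)) -> rs (fun m => c (j, k, m)) y m ord0 = rs (fun m => c' (j, k, m)) y' m ord0 &
      G (LB j k (WI m)) -> rs (fun m => c (j, k, m)) y m (lift ord0 m) = rs (fun m => c' (j, k, m)) y' m (lift ord0 m)].
  move=> m y y' HR; rewrite /rs /= Hc; split.
  - move=> i; case: (i =P ord0) => [->|Hi]; first by rewrite HR; case: (_ == a); rewrite ?addr0 // addrAC.
    by case: (i =P lift ord0 m) => _; rewrite HR //; case: (_ == a); rewrite ?addr0 // addrAC.
  - by [].
  - move=> /HG /= [Ha|Hd]; rewrite HR.
      by rewrite ifN ?addr0 //; apply: contra Ha => /eqP ->.
    by rewrite Hd mulr0; case: (_ == a); rewrite ?addr0.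
  - have Hn : (lift ord0 m == ord0) = false by apply/negbTE; rewrite eq_sym neq_lift.
    move=> /HG /= [Ha|Hd]; rewrite eqxx HR.
      by rewrite ifN ?addr0 //; apply: contra Ha => /eqP ->.
    by rewrite Hd mulr0; case: (_ == a); rewrite ?addr0.
have [HA HB] := rpair Hstep (enum 'I_t) (L := [::]) (tr := [::]) (tr' := [::]) I Hz.
split.
  rewrite /btr /blab /=; apply: agr_cat => //.
  apply: agr_map => i /HG /= [Ha|Hd]; rewrite Hp Hst.
    by rewrite ifN ?addr0 //; apply: contra Ha => /eqP ->.
  by rewrite Hd; case: (_ == a); rewrite ?addr0.
move=> i /=; rewrite !inord_val; exact: HB.
Qed.

Definition shift (D : 'I_n -> F) (b : 'I_n) (m : 'I_t) : F :=
  if lift ord0 m == b then - (D ord0 + \sum_(m' | lift ord0 m' != b) D (lift ord0 m'))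
  else D (lift ord0 m).

Lemma sum_lift1 (f : 'I_t -> F) ma :
  \sum_(m <- enum 'I_t | lift ord0 m == lift ord0 ma) f m = f ma.
Proof.
rewrite big_enum_cond /=.
by rewrite (eq_bigl (fun m => m == ma)) ?big_pred1_eq // => m; rewrite (inj_eq (@lift_inj _ ord0)).
Qed.

Lemma sum_shift D b mb : b = lift ord0 mb ->
  \sum_(m <- enum 'I_t) shift D b m = - D ord0.
Proof.
move=> Hb; rewrite big_enum /= (bigD1 mb) //= {1}/shift Hb eqxx.
have E1 : \sum_(m' | lift ord0 m' != lift ord0 mb) D (lift ord0 m') =
          \sum_(m' | m' != mb) D (lift ord0 m').
  by apply: eq_bigl => m'; rewrite (inj_eq (@lift_inj _ ord0)).
have E2 : \sum_(m' | m' != mb) shift D (lift ord0 mb) m' = \sum_(m' | m' != mb) D (lift ord0 m').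
  by apply: eq_bigr => m' Hm; rewrite /shift ifN // (inj_eq (@lift_inj _ ord0)).
rewrite E1 E2.
by rewrite opprD -addrA addNr addr0.
Qed.

Lemma block_switch G (x x' : {ffun 'I_n -> {ffun 'I_l -> F}}) (p p' : {ffun 'I_n -> F})
    (c c' : ssm_coins F t l) (j : 'I_n) k b D :
  (forall w, ~ G (LB j k w)) ->
  (forall i, p' j * st x' p' c' j k i = p j * st x p c j k i + D i) ->
  (forall m, c' (j, k, m) = c (j, k, m) + shift D b m) ->
  agr G (blab (j, k)) (btr x p c (j, k)) (btr x' p' c' (j, k)) /\
  forall i, i != b -> st x' p' c' j.+1 k i = st x p c j.+1 k i.
Proof.
move=> HG Hz Hc.
have Hstep : forall m y y', True -> [/\ True,
      G (LB j k (WR m)) -> c (j, k, m) = c' (j, k, m),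
      G (LB j k (W0 m)) -> rs (fun m => c (j, k, m)) y m ord0 = rs (fun m => c' (j, k, m)) y' m ord0 &
      G (LB j k (WI m)) -> rs (fun m => c (j, k, m)) y m (lift ord0 m) = rs (fun m => c' (j, k, m)) y' m (lift ord0 m)].
  by move=> m y y' _; split => // /HG.
have [HA _] := rpair Hstep (enum 'I_t) (L := [::]) (tr := [::]) (tr' := [::])
   (y := fun i => p j * st x p c j k i) (y' := fun i => p' j * st x' p' c' j k i) I I.
split.
  rewrite /btr /blab /=; apply: agr_cat => //.
  by apply: agr_map => i /HG.
move=> i Hib /=; rewrite !inord_val /refresh !refresh_out Hz.
case: (unliftP ord0 i) Hib => [ma ->|->] Hib.
  have Hn : (lift ord0 ma == ord0) = false by apply/negbTE; rewrite eq_sym neq_lift.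
  rewrite !Hn (sum_lift1 (fun m => c' (j, k, m))) (sum_lift1 (fun m => c (j, k, m))) Hc /shift ifN //.
  by rewrite opprD addrACA subrr addr0.
rewrite eqxx.
have [Hb0|Hb0] := eqVneq b ord0; first by rewrite Hb0 eqxx in Hib.
case: (unliftP ord0 b) Hb0 => [mb Hb|->]; last by rewrite eqxx.
move=> _.
rewrite (eq_bigr (fun m => c (j, k, m) + shift D b m)) // big_split /=.
rewrite (sum_shift D Hb).
by rewrite addrACA subrr addr0.
Qed.

Lemma st_ext (x : {ffun 'I_n -> {ffun 'I_l -> F}}) (p : {ffun 'I_n -> F}) (c c' : ssm_coins F t l) J k :
  (forall j' m, (j' < J)%N -> c (inord j', k, m) = c' (inord j', k, m)) ->
  st x p c J k = st x p c' J k.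
Proof.
elim: J => [|J IH] H //=.
rewrite IH; last by move=> j' m Hj; apply: H; apply: ltnW.
congr (refresh _ _).2; apply: functional_extensionality => m; exact: H.
Qed.

Definition initlab := [seq LX i k | i <- enum 'I_n, k <- enum 'I_l] ++ [seq LP j | j <- enum 'I_n].
Definition labs := initlab ++ flatten [seq blab jk | jk <- jklist].

Section Swap.
Variables (x x' : {ffun 'I_n -> {ffun 'I_l -> F}}) (p p' : {ffun 'I_n -> F}).
Variables (jsw b : 'I_l -> 'I_n) (a0 : 'I_n).
Hypothesis Hp : forall j k, j != jsw k -> p' j = p j.
Hypothesis Hx : forall i k, i != a0 -> x' i k = x i k.

Definition Delta (c : ssm_coins F t l) k : 'I_n -> F := fun i =>
  p' (jsw k) * st x' p' c (jsw k) k i - p (jsw k) * st x p c (jsw k) k i.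

Definition phi (c : ssm_coins F t l) : ssm_coins F t l :=
  [ffun jkm => if jkm.1.1 == jsw jkm.1.2 then c jkm + shift (Delta c jkm.1.2) (b jkm.1.2) jkm.2
               else c jkm].

Lemma phi_low c k J : (J <= jsw k)%N -> st x' p' (phi c) J k = st x' p' c J k.
Proof.
move=> HJ; apply: st_ext => j' m Hj; rewrite ffunE /= ifN //.
have Hj' : (j' < n)%N by apply: (leq_trans Hj); apply: (leq_trans HJ); apply: ltnW.
apply/negP => /eqP E.
by move: Hj HJ; rewrite -E inordK // => H1 H2; move: (leq_trans H1 H2); rewrite ltnn.
Qed.

Lemma phi_inj : injective phi.
Proof.
move=> c1 c2 E.
have ES : forall k, Delta c1 k = Delta c2 k.
  move=> k; rewrite /Delta.
  have -> : st x' p' c1 (jsw k) k = st x' p' c2 (jsw k) k.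
    rewrite -(phi_low c1 (leqnn _)) -(phi_low c2 (leqnn _)).
    by rewrite E.
  have -> : st x p c1 (jsw k) k = st x p c2 (jsw k) k.
    apply: st_ext => j' m Hj.
    have Hj' : (j' < n)%N by apply: (ltn_trans Hj).
    have Hne : (inord j' == jsw k) = false.
      by apply/negP => /eqP H; move: Hj; rewrite -H inordK // ltnn.
    by have := congr1 (fun f : ssm_coins F t l => f (inord j', k, m)) E; rewrite !ffunE /= Hne.
  by [].
apply/ffunP => jkm; have := congr1 (fun f : ssm_coins F t l => f jkm) E; rewrite !ffunE.
case: ifP => _ //; rewrite ES; exact: addIr.
Qed.

Definition Gb (j : 'I_n) (k : 'I_l) (w : wire) : Prop :=
  if (j < jsw k)%N then (lineof w != Some a0 \/ x' a0 k = x a0 k)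
  else if j == jsw k then False else lineof w != Some (b k).

Definition G (L : lab) : Prop :=
  match L with LX i k => x' i k = x i k | LP j => p' j = p j | LB j k w => Gb j k w end.

Definition Inv c k J : Prop :=
  if (J <= jsw k)%N then
    exists d, (x' a0 k = x a0 k -> d = 0) /\
      forall i, st x' p' (phi c) J k i = st x p c J k i + (if i == a0 then d else 0)
  else exists d, forall i, st x' p' (phi c) J k i = st x p c J k i + (if i == b k then d else 0).

Lemma row_step c k (j : 'I_n) : Inv c k j ->
  agr G (blab (j, k)) (btr x p c (j, k)) (btr x' p' (phi c) (j, k)) /\ Inv c k j.+1.
Proof.
rewrite /Inv; case: (ltngtP j (jsw k)) => Hj.
- move=> -[d [Hd Hst]].
  have Hjn : j != jsw k by rewrite neq_ltn Hj.
  have Hc : forall m, phi c (j, k, m) = c (j, k, m) by move=> m; rewrite ffunE /= (negbTE Hjn).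
  have HG : forall w, G (LB j k w) -> lineof w != Some a0 \/ d = 0.
    by move=> w; rewrite /= /Gb Hj => -[H|/Hd ->]; [left|right].
  have [H1 H2] := @block_stay G x x' p p' c (phi c) j k a0 d (Hp Hjn) Hc Hst HG.
  split => //; exists (p j * d); split; last exact: H2.
  by move=> /Hd ->; rewrite mulr0.
- move=> -[d Hst].
  have Hjn : j != jsw k by rewrite neq_ltn Hj orbT.
  have Hc : forall m, phi c (j, k, m) = c (j, k, m) by move=> m; rewrite ffunE /= (negbTE Hjn).
  have HG : forall w, G (LB j k w) -> lineof w != Some (b k) \/ d = 0.
    by move=> w; rewrite /= /Gb ltnNge (ltnW Hj) /= (negbTE Hjn) => H; left.
  have [H1 H2] := @block_stay G x x' p p' c (phi c) j k (b k) d (Hp Hjn) Hc Hst HG.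
  by split => //; exists (p j * d).
- have Hj' : j = jsw k by apply: val_inj.
  move=> _.
  have HG : forall w, ~ G (LB j k w) by move=> w; rewrite /= /Gb Hj ltnn Hj' eqxx.
  have Hz : forall i, p' j * st x' p' (phi c) j k i = p j * st x p c j k i + Delta c k i.
    by move=> i; rewrite Hj' phi_low // /Delta addrC subrK.
  have Hc : forall m, phi c (j, k, m) = c (j, k, m) + shift (Delta c k) (b k) m.
    by move=> m; rewrite ffunE /= Hj' eqxx.
  have [H1 H2] := @block_switch G x x' p p' c (phi c) j k (b k) (Delta c k) HG Hz Hc.
  split => //; exists (st x' p' (phi c) j.+1 k (b k) - st x p c j.+1 k (b k)) => i.
  case: eqP => [->|/eqP Hi]; first by rewrite addrC subrK.
  by rewrite H2 // addr0.
Qed.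

Lemma inv_all c k J : (J <= n)%N -> Inv c k J.
Proof.
elim: J => [|J IH] HJ.
  rewrite /Inv leq0n; exists (x' a0 k - x a0 k); split; first by move=> ->; rewrite subrr.
  move=> i /=; case: eqP => [->|/eqP Hi]; first by rewrite addrC subrK.
  by rewrite Hx // addr0.
have := (row_step (j := Ordinal HJ) (IH (ltnW HJ))).2; by [].
Qed.

Lemma trace_agr c : agr G labs (ssm x p c).1 (ssm x' p' (phi c)).1.
Proof.
rewrite !CF /labs /initlab /init /=; apply: agr_cat; first apply: agr_cat.
- by apply: agr_allpairs => i k /= ->.
- by apply: agr_map => j /= ->.
- apply: agr_flatten => -[j k].
  exact: (row_step (inv_all c k (ltnW (ltn_ord j)))).1.
Qed.

Lemma obs_eq (P : seq nat) (O : {set 'I_n}) c :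
  (forall w, w \in P -> (w < size labs)%N -> G (nth (LP ord0) labs w)) ->
  (forall i k, i \in O -> i != b k) ->
  ssm_obs P O x p c = ssm_obs P O x' p' (phi c).
Proof.
move=> HP HO; rewrite /ssm_obs; congr (_ ++ _).
  apply/eq_in_map => w Hw.
  have HA := trace_agr c; have [S1 S2] := agr_size HA.
  case: (ltnP w (size labs)) => Hws.
    exact: (agr_nth HA Hws (HP w Hw Hws)).
  by rewrite !nth_default ?S1 ?S2.
apply/eq_in_allpairs => i k; rewrite mem_enum => Hi _.
rewrite !CF /=.
have := inv_all c k (leqnn n); rewrite /Inv leqNgt ltn_ord /= => -[d ->].
by rewrite ifN ?addr0 // HO.
Qed.

Lemma prob_eq (P : seq nat) (O : {set 'I_n}) v :
  (forall w, w \in P -> (w < size labs)%N -> G (nth (LP ord0) labs w)) ->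
  (forall i k, i \in O -> i != b k) ->
  ssm_prob P O x p v = ssm_prob P O x' p' v.
Proof.
move=> HP HO; rewrite /ssm_prob; congr (_%:R / _).
rewrite -[in RHS](card_preimset _ phi_inj); apply: eq_card => c.
by rewrite !inE (obs_eq c HP HO).
Qed.

End Swap.

Definition gL (T : Type) (f : lab -> option T) (w : nat) : option T :=
  if (w < size labs)%N then f (nth (LP ord0) labs w) else None.

Lemma card_pmap_le (T : finType) (g : nat -> option T) (s : seq nat) :
  (#|[set i in pmap g s]| <= size s)%N.
Proof.
rewrite cardsE; apply: (leq_trans (card_size _)).
by rewrite size_pmap count_size.
Qed.

Lemma in_pmapS (T : finType) (g : nat -> option T) (s : seq nat) w i :
  w \in s -> g w = Some i -> i \in [set i in pmap g s].
Proof. by move=> Hw Hg; rewrite inE mem_pmap -Hg map_f. Qed.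

Lemma pick_out (S : {set 'I_n}) : (#|S| <= t)%N -> odflt ord0 [pick i | i \notin S] \notin S.
Proof.
move=> HS; case: pickP => [i -> //|H].
have : [set: 'I_n] \subset S by apply/subsetP => i _; move: (H i) => /negbFE.
move/subset_leq_card; rewrite cardsT card_ord => H2.
by move: (leq_trans H2 HS); rewrite ltnn.
Qed.

Section Main.
Variables (P : seq nat) (O : {set 'I_n}).
Hypothesis HPO : (size P + #|O| <= t)%N.

Lemma HPt : (size P <= t)%N.
Proof. by apply: leq_trans HPO; apply: leq_addr. Qed.

Definition rowk (k : 'I_l) (L : lab) : option 'I_n :=
  match L with LB j k' _ => if k' == k then Some j else None | _ => None end.
Definition Jset k := [set j in pmap (gL (rowk k)) P].
Definition jstar k := odflt ord0 [pick j | j \notin Jset k].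

Definition postl (k : 'I_l) (j0 : 'I_n) (L : lab) : option 'I_n :=
  match L with LB j k' w => if (k' == k) && (j0 < j)%N then lineof w else None | _ => None end.
Definition Bset k j0 := O :|: [set i in pmap (gL (postl k j0)) P].
Definition bsel k j0 := odflt ord0 [pick i | i \notin Bset k j0].

Definition prelineX (L : lab) : option 'I_n :=
  match L with LX i _ => Some i | LB j k w => if (j < jstar k)%N then lineof w else None
  | LP _ => None end.
Definition Ix := [set i in pmap (gL prelineX) P].

Definition rowof (L : lab) : option 'I_n :=
  match L with LP j => Some j | LB j _ _ => Some j | LX _ _ => None end.
Definition Ip := [set j in pmap (gL rowof) P].

Lemma jstar_ok k : jstar k \notin Jset k.
Proof. by apply: pick_out; apply: leq_trans (card_pmap_le _ _) HPt. Qed.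

Lemma bsel_ok k j0 : bsel k j0 \notin Bset k j0.
Proof.
apply: pick_out; rewrite cardsU; apply: leq_trans (leq_subr _ _) _.
by rewrite addnC; apply: leq_trans HPO; rewrite leq_add2r card_pmap_le.
Qed.

Lemma bsel_O k j0 i : i \in O -> i != bsel k j0.
Proof.
move=> Hi; apply/eqP => E; have := bsel_ok k j0.
by rewrite -E inE Hi.
Qed.

Lemma post_ok k (j0 : 'I_n) w (j : 'I_n) wr : w \in P -> (w < size labs)%N ->
  nth (LP ord0) labs w = LB j k wr -> (j0 < j)%N -> lineof wr != Some (bsel k j0).
Proof.
move=> Hw Hs HL Hj; apply/eqP => E; have := bsel_ok k j0.
rewrite inE negb_or => /andP [_ /negP]; apply.
by apply: (in_pmapS Hw); rewrite /gL Hs HL /= eqxx Hj.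
Qed.

Lemma xchange (x x' : {ffun 'I_n -> {ffun 'I_l -> F}}) (p : {ffun 'I_n -> F}) i0 v :
  (forall i, i != i0 -> x' i = x i) -> (i0 \in Ix -> x' i0 = x i0) ->
  ssm_prob P O x p v = ssm_prob P O x' p v.
Proof.
move=> Hx Hi0.
case: (boolP (i0 \in Ix)) => HI.
  have -> : x' = x by apply/ffunP => i; case: (eqVneq i i0) => [->|/Hx]; [exact: Hi0|].
  by [].
apply: (@prob_eq x x' p p jstar (fun k => bsel k (jstar k)) i0) => //.
- by move=> i k /Hx ->.
- move=> w Hw Hs; case HL: (nth (LP ord0) labs w) => [i k|j|j k wr] //=.
  + case: (eqVneq i i0) => [Ei|/Hx -> //].
    by move: HI; rewrite -Ei (in_pmapS Hw (i := i)) // /gL Hs HL.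
  + rewrite /Gb; case: ltnP => Hj.
      left; apply/eqP => E; move: HI; rewrite (in_pmapS Hw (i := i0)) //.
      by rewrite /gL Hs HL /= Hj E.
    case: eqP => [Ej|/eqP Hne].
      have := jstar_ok k; rewrite -Ej (in_pmapS Hw (i := j)) //.
      by rewrite /gL Hs HL /= eqxx.
    by apply: (post_ok Hw Hs HL); rewrite ltn_neqAle Hj andbT eq_sym; apply: contra Hne => /eqP H; apply/eqP/val_inj.
- by move=> i k /bsel_O.
Qed.

Lemma pchange (x : {ffun 'I_n -> {ffun 'I_l -> F}}) (p p' : {ffun 'I_n -> F}) j0 v :
  (forall j, j != j0 -> p' j = p j) -> (j0 \in Ip -> p' j0 = p j0) ->
  ssm_prob P O x p v = ssm_prob P O x p' v.
Proof.
move=> Hp Hj0.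
case: (boolP (j0 \in Ip)) => HI.
  have -> : p' = p by apply/ffunP => j; case: (eqVneq j j0) => [->|/Hp]; [exact: Hj0|].
  by [].
apply: (@prob_eq x x p p' (fun _ => j0) (fun k => bsel k j0) ord0) => //.
- by move=> j k /Hp.
- move=> w Hw Hs; case HL: (nth (LP ord0) labs w) => [i k|j|j k wr] //=.
  + case: (eqVneq j j0) => [Ej|/Hp -> //].
    by move: HI; rewrite -Ej (in_pmapS Hw (i := j)) // /gL Hs HL.
  + rewrite /Gb; case: ltnP => Hj; first by right.
    case: eqP => [Ej|/eqP Hne].
      by move: HI; rewrite -Ej (in_pmapS Hw (i := j)) // /gL Hs HL.
    by apply: (post_ok Hw Hs HL); rewrite ltn_neqAle Hj andbT eq_sym; apply: contra Hne => /eqP H; apply/eqP/val_inj.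
- by move=> i k /bsel_O.
Qed.

Lemma main_card : (#|Ix| <= size P)%N /\ (#|Ip| <= size P)%N.
Proof. by split; apply: card_pmap_le. Qed.

Lemma main_eq (x : {ffun 'I_n -> {ffun 'I_l -> F}}) (p : {ffun 'I_n -> F}) v :
  ssm_prob P O x p v =
  ssm_prob P O [ffun i => odflt [ffun => 0] (share_mask Ix x i)]
               [ffun j => odflt 1 (share_mask Ip p j)] v.
Proof.
set xh := [ffun i => _]; set ph := [ffun j => _].
pose xm m := [ffun i : 'I_n => if (i < m)%N then xh i else x i].
pose pm m := [ffun j : 'I_n => if (j < m)%N then ph j else p j].
have HxI : forall i, i \in Ix -> xh i = x i by move=> i Hi; rewrite !ffunE Hi.
have HpI : forall j, j \in Ip -> ph j = p j by move=> j Hj; rewrite !ffunE Hj.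
have Ex : forall m, ssm_prob P O x p v = ssm_prob P O (xm m) p v.
  elim => [|m IH].
    by congr ssm_prob; apply/ffunP => i; rewrite ffunE.
  rewrite IH; apply: (@xchange _ _ p (inord m) v).
    move=> i Hi; rewrite !ffunE ltnS leq_eqVlt.
    case: (ltnP m n) => Hm.
      suff -> : (nat_of_ord i == m) = false by [].
      apply/negbTE; apply: contra Hi => /eqP <-; by rewrite inord_val.
    by rewrite (leq_trans (ltn_ord i) Hm) orbT.
  by move=> HI; rewrite !ffunE HI /=; case: ifP; case: ifP.
have Ep : forall m, ssm_prob P O xh p v = ssm_prob P O xh (pm m) v.
  elim => [|m IH].
    by congr ssm_prob; apply/ffunP => i; rewrite ffunE.
  rewrite IH; apply: (@pchange xh _ _ (inord m) v).
    move=> i Hi; rewrite !ffunE ltnS leq_eqVlt.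
    case: (ltnP m n) => Hm.
      suff -> : (nat_of_ord i == m) = false by [].
      apply/negbTE; apply: contra Hi => /eqP <-; by rewrite inord_val.
    by rewrite (leq_trans (ltn_ord i) Hm) orbT.
  by move=> HI; rewrite !ffunE HI /=; case: ifP; case: ifP.
rewrite (Ex n) (_ : xm n = xh); last by apply/ffunP => i; rewrite ffunE ltn_ord.
rewrite (Ep n) (_ : pm n = ph) //; by apply/ffunP => i; rewrite ffunE ltn_ord.
Qed.

End Main.
End Proof.

Theorem lemma2 (F : finFieldType) (t l : nat) (ht : (1 <= t)%N) :
  forall (P : seq nat) (O : {set 'I_t.+1}),
    (size P + #|O| <= t)%N ->
    exists (Ix Ip : {set 'I_t.+1}),
      (#|Ix| <= size P)%N /\ (#|Ip| <= size P)%N /\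
      exists Sim : {ffun 'I_t.+1 -> option {ffun 'I_l -> F}} ->
                   {ffun 'I_t.+1 -> option F} -> seq F -> rat,
        forall (x : {ffun 'I_t.+1 -> {ffun 'I_l -> F}}) (p : {ffun 'I_t.+1 -> F}),
          (forall i, p i != 0) ->
          forall v : seq F, ssm_prob P O x p v = Sim (share_mask Ix x) (share_mask Ip p) v.
Proof.
move=> P O HPO.
exists (Ix t l P), (Ip t l P).
have [H1 H2] := main_card t l P.
do 2 split => //.
exists (fun mx mp v => ssm_prob P O [ffun i => odflt [ffun => 0] (mx i)] [ffun j => odflt 1 (mp j)] v).
move=> x p _ v; exact: (main_eq HPO).
Qed.
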